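(* Let $u$ be a drift function, $p\in[1,\infty)$, and $\mu$ a finite non-zero $P$-invariant measure on $\mathbf X$. Then $\mathcal E^p_u(\mathbf X)\subset\mathcal L^p(\mathbf X,\mu)$ and the inclusion map is continuous.
   Context: $(X_n)$ Markov chain on a complete separable metric space $\mathbf X$, $\mathbb P_x$ its law from $x$, $Pf(x)=\mathbb E_xf(X_1)$; $\mu$ is $P$-invariant if $\int Pf\,d\mu=\int f\,d\mu$ for non-negative Borel $f$. $\tau$ is a $\theta$-compatible stopping time ($\mathbb P_x(\tau=0)=0$ and $\mathbb P_x$-a.s. $\tau\ge2\Rightarrow\tau\circ\theta=\tau-1$) with $\mathbb E_x\tau<\infty$ for all $x$; $Qf(x)=\mathbb E_x[f(X_\tau)\mathbf 1_{\tau<\infty}]$. A drift function is a Borel $u:\mathbf X\to[1,\infty)$ such that $u-Pu$ is bounded below and $Qu$, $x\mapsto\mathbb E_x\tau/u(x)$ and $P(u-Pu+B_u)/(u-Pu+B_u)$ are bounded on $\mathbf X$, where $B_u=\sup(Pu-u)+1$. For Borel $v\ge1$, $\mathcal F^p_v$ is the space of Borel $f$ with $\sup|f|^p/v<\infty$, norm $\sup|f|/v^{1/p}$; $\mathcal E^p_u:=\mathcal F^p_{u-Pu+B_u}$. *)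

(* Defs.v *)
From HB Require Import structures.
From mathcomp Require Import all_boot all_order all_algebra.
From mathcomp Require Import all_classical all_reals all_analysis measurable_realfun.
Set Implicit Arguments. Unset Strict Implicit. Unset Printing Implicit Defensive.
Import Order.TTheory GRing.Theory Num.Theory.
Import numFieldNormedType.Exports.
Local Open Scope classical_set_scope.
Local Open Scope ring_scope.

(* The state space: a complete (pseudo)metric space T, which is Hausdorff
   (hence a genuine metric space) and separable; it is equipped with its
   Borel sigma-algebra, i.e. the sigma-algebra generated by the open sets. *)
Definition polish_space {R : realType} (T : completePseudoMetricType R) : Prop :=
  hausdorff_space T /\ exists D : set T, countable D /\ dense D.

Notation Borel T := (g_sigma_algebraType (@open T)).

Section chain.
Context {R : realType} {d dO : measure_display}
  {X : measurableType d} {Omega : measurableType dO}.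
Variables (Px : X -> probability Omega R) (Xn : nat -> Omega -> X).

Local Open Scope ereal_scope.

Definition Pop (f : X -> \bar R) (x : X) : \bar R := \int[Px x]_w f (Xn 1 w).

Fixpoint iterP (fs : nat -> X -> \bar R) (k m : nat) : X -> \bar R :=
  match m with
  | 0 => fs k
  | m'.+1 => fun x => fs k x * Pop (iterP fs k.+1 m') x
  end.

(* (P_x)_x is the family of laws of a time-homogeneous Markov chain (X_n)
   started at x with transition kernel P (Pf(x) = E_x f(X_1)):
   x |-> P_x(A) is measurable, and finite-dimensional distributions are
   E_x[f_0(X_0)...f_n(X_n)] = f_0 P(f_1 P( ... P f_n))(x). *)
Definition is_markov_family : Prop :=
  (forall n, measurable_fun setT (Xn n)) /\
  (forall A : set Omega, measurable A -> measurable_fun setT (fun x => Px x A)) /\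
  (forall (fs : nat -> X -> \bar R) (n : nat) (x : X),
     (forall i, measurable_fun setT (fs i)) ->
     (forall i y, 0 <= fs i y) ->
     \int[Px x]_w (\prod_(i < n.+1) fs i (Xn i w)) = iterP fs 0 n x).

Definition is_shift (theta : Omega -> Omega) : Prop :=
  measurable_fun setT theta /\ forall n w, Xn n (theta w) = Xn n.+1 w.

Definition nat_filtration (n : nat) : set (set Omega) :=
  <<s \bigcup_(k in [set k | (k <= n)%N]) preimage_set_system setT (Xn k) measurable >>.

(* random times with values in N u {oo}; None stands for oo *)
Definition is_stopping_time (tau : Omega -> option nat) : Prop :=
  forall n, nat_filtration n [set w | tau w = Some n].

Definition theta_compatible (theta : Omega -> Omega) (tau : Omega -> option nat) : Prop :=
  forall x, Px x [set w | tau w = Some 0%N] = 0 /\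
    {ae Px x, forall w,
      (if tau w is Some n then (2 <= n)%N else true) ->
      tau (theta w) = omap predn (tau w)}.

Definition tauE (tau : Omega -> option nat) (w : Omega) : \bar R :=
  if tau w is Some n then (n%:R)%:E else +oo.

Definition Qop (tau : Omega -> option nat) (f : X -> \bar R) (x : X) : \bar R :=
  \int[Px x]_w (if tau w is Some n then f (Xn n w) else 0).

Definition Bu (u : X -> R) : \bar R :=
  ereal_sup [set Pop (EFin \o u) x - (u x)%:E | x in setT] + 1.

(* u - Pu + B_u (extended-real valued; finite for a drift function) *)
Definition wu (u : X -> R) (x : X) : \bar R := (u x)%:E - Pop (EFin \o u) x + Bu u.

(* its real-valued version (equal to wu when wu is finite) *)
Definition vu (u : X -> R) (x : X) : R := fine (wu u x).

Definition drift_function (tau : Omega -> option nat) (u : X -> R) : Prop :=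
  measurable_fun setT u /\ (forall x, (1 <= u x)%R) /\
  (exists c : R, forall x, c%:E <= (u x)%:E - Pop (EFin \o u) x) /\
  (* Qu bounded (it is nonnegative) *)
  (exists M : R, forall x, Qop tau (EFin \o u) x <= M%:E) /\
  (* x |-> E_x tau / u(x) bounded (it is nonnegative) *)
  (exists M : R, forall x, \int[Px x]_w tauE tau w <= M%:E * (u x)%:E) /\
  (* P(u - Pu + B_u) / (u - Pu + B_u) bounded (it is nonnegative) *)
  (exists M : R, forall x, Pop (wu u) x <= M%:E * wu u x).

Definition is_invariant (mu : {measure set X -> \bar R}) : Prop :=
  forall f : X -> \bar R, measurable_fun setT f -> (forall x, 0 <= f x) ->
    \int[mu]_x Pop f x = \int[mu]_x f x.

Definition in_Fp (v : X -> R) (p : R) (f : X -> R) : Prop :=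
  measurable_fun setT f /\ exists M : R, forall x, (`|f x| `^ p <= M * v x)%R.

Definition Fp_norm (v : X -> R) (p : R) (f : X -> R) : \bar R :=
  ereal_sup [set (`|f x| / v x `^ p^-1)%:E | x in setT].

Definition in_Ep (u : X -> R) (p : R) (f : X -> R) : Prop := in_Fp (vu u) p f.
Definition Ep_norm (u : X -> R) (p : R) (f : X -> R) : \bar R := Fp_norm (vu u) p f.

End chain.

(* Main.v *)
Require Import Defs.
From HB Require Import structures.
From mathcomp Require Import all_boot all_order all_algebra.
From mathcomp Require Import all_classical all_reals all_analysis measurable_realfun.
From mathcomp Require Import ring lra.
Import Order.TTheory GRing.Theory Num.Theory.
Import numFieldNormedType.Exports.
Local Open Scope classical_set_scope.
Local Open Scope ring_scope.

Lemma mPop (R : realType) d dO (X : measurableType d) (Omega : measurableType dO)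
  (Px : X -> probability Omega R) (Xn : nat -> Omega -> X) (f : X -> \bar R) :
  is_markov_family Px Xn -> measurable_fun setT f -> (forall x, (0 <= f x)%E) ->
  measurable_fun setT (Pop Px Xn f).
Proof.
move=> [mX [mP _]] mf f0.
rewrite /Pop.
apply: (@measurable_fun_integral_kernel _ _ X Omega R (fun x => Px x)) => //.
exact: measurableT_comp.
Qed.

Lemma Pop_ge0 (R : realType) d dO (X : measurableType d) (Omega : measurableType dO)
  (Px : X -> probability Omega R) (Xn : nat -> Omega -> X) (f : X -> \bar R) x :
  (forall x, (0 <= f x)%E) -> (0 <= Pop Px Xn f x)%E.
Proof. by move=> f0; apply: integral_ge0 => w _. Qed.

Lemma Pop_le (R : realType) d dO (X : measurableType d) (Omega : measurableType dO)
  (Px : X -> probability Omega R) (Xn : nat -> Omega -> X) (f g : X -> \bar R) x :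
  is_markov_family Px Xn -> measurable_fun setT f -> measurable_fun setT g ->
  (forall x, (0 <= f x)%E) -> (forall x, (f x <= g x)%E) ->
  (Pop Px Xn f x <= Pop Px Xn g x)%E.
Proof.
move=> [mX _] mf mg f0 fg; apply: ge0_le_integral => //.
- exact: measurableT_comp.
- exact: measurableT_comp.
Qed.

Lemma Pop_cst (R : realType) d dO (X : measurableType d) (Omega : measurableType dO)
  (Px : X -> probability Omega R) (Xn : nat -> Omega -> X) (r : R) x :
  Pop Px Xn (cst r%:E) x = r%:E.
Proof. rewrite /Pop integral_cst//. rewrite -[RHS]mule1; congr (_ * _)%E; exact: probability_setT. Qed.


Lemma Lnorm_bound (R : realType) d (T : measurableType d)
  (mu : {measure set T -> \bar R}) (v f : T -> R) (A Kf p : R) :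
  measurable_fun setT v -> (forall x, 0 <= v x) ->
  (\int[mu]_x (v x)%:E <= A%:E)%E -> measurable_fun setT f -> 0 <= Kf ->
  (forall x, `|f x| `^ p <= Kf * v x) -> 0 < p ->
  ('N[mu]_(p%:E)[EFin \o f] <= ((Kf * A) `^ p^-1)%:E)%E.
Proof.
move=> mv v0 hA mf K0 hf p0.
have hJ : (\int[mu]_x ((`|f x| `^ p)%:E) <= (Kf * A)%:E)%E.
  have h1 : (\int[mu]_x ((`|f x| `^ p)%:E) <= \int[mu]_x ((Kf * v x)%:E))%E.
    apply: ge0_le_integral => //.
    - apply/measurable_EFinP; apply: (measurableT_comp (measurable_powR p)).
      exact: measurableT_comp (@normr_measurable R setT) mf.
    - apply/measurable_EFinP; exact: measurable_funM.
    - by move=> x _; rewrite lee_fin.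
  apply: le_trans h1 _.
  under eq_integral do rewrite EFinM.
  rewrite ge0_integralZl_EFin//; last first.
    - exact/measurable_EFinP.
    - by move=> x _; rewrite lee_fin.
  rewrite EFinM; apply: lee_pmul => //; apply: integral_ge0 => x _.
  by rewrite lee_fin.
rewrite unlock /=.
set I := (X in (X `^ _)%E).

have I0 : (0 <= I)%E by apply: integral_ge0 => x _; by rewrite lee_fin powR_ge0.
have hI : (I <= (Kf * A)%:E)%E by exact: hJ.
have Ifin : I \is a fin_num.
  by rewrite ge0_fin_numE// (le_lt_trans hI)// ltry.
rewrite -(fineK Ifin) poweR_EFin lee_fin ge0_ler_powR//.
- by rewrite invr_ge0 ltW.
- by rewrite nnegrE fine_ge0.
- rewrite nnegrE; have := le_trans I0 hI; by rewrite lee_fin.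
- by rewrite -lee_fin fineK.
Qed.

Theorem mainTheorem14 (R : realType) (T : completePseudoMetricType R)
  (dO : measure_display) (Omega : measurableType dO)
  (Px : Borel T -> probability Omega R) (Xn : nat -> Omega -> Borel T)
  (theta : Omega -> Omega) (tau : Omega -> option nat)
  (u : Borel T -> R) (p : R) (mu : {measure set (Borel T) -> \bar R}) :
  polish_space T ->
  is_markov_family Px Xn ->
  is_shift Xn theta ->
  is_stopping_time Xn tau ->
  theta_compatible Px theta tau ->
  (forall x, \int[Px x]_w tauE tau w < +oo)%E ->
  drift_function Px Xn tau u ->
  1 <= p ->
  is_invariant Px Xn mu ->
  (mu setT < +oo)%E -> mu setT != 0 ->
  (forall f : Borel T -> R, in_Ep Px Xn u p f -> f \in Lfun mu p%:E) /\
  exists C : R, 0 <= C /\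
    forall f : Borel T -> R, in_Ep Px Xn u p f ->
      ('N[mu]_(p%:E)[EFin \o f] <= C%:E * Ep_norm Px Xn u p f)%E.
Proof.
move=> _ hM _ _ _ _ [mu_ [u1 [[c hc] _]]] p1 hinv mufin mu0.
have [x0 _] : [set: Borel T] !=set0.
  apply/set0P; apply: contra mu0 => /eqP ->; by rewrite measure0.
have mEu : measurable_fun setT (EFin \o u) by exact/measurable_EFinP.
have u0 x : (0 <= (EFin \o u) x)%E by rewrite /= lee_fin (le_trans _ (u1 x)).
pose PuE := Pop Px Xn (EFin \o u).
have mPu : measurable_fun setT PuE by exact: mPop.
have Pu0 x : (0 <= PuE x)%E by exact: Pop_ge0.
have Pufin x : PuE x \is a fin_num.
  rewrite ge0_fin_numE//; have := hc x; rewrite -/PuE.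
  by case: (PuE x) => //= r _; exact: ltry.
pose pu x := fine (PuE x).
have PuE_pu x : PuE x = (pu x)%:E by rewrite fineK.
have hc' x : c <= u x - pu x by rewrite -lee_fin EFinB -PuE_pu; exact: hc.
pose S := [set PuE x - (u x)%:E | x in [set: Borel T]]%E.
have Sub : (ereal_sup S <= (- c)%:E)%E.
  apply: ge_ereal_sup => _ [x _ <-]; rewrite PuE_pu -EFinB lee_fin.
  have := hc' x; lra.
have Slb : ((pu x0 - u x0)%:E <= ereal_sup S)%E.
  by apply: ereal_sup_ubound; exists x0 => //; rewrite PuE_pu EFinB.
have Sfin : ereal_sup S \is a fin_num.
  by rewrite fin_numElt (lt_le_trans (ltNyr _) Slb) (le_lt_trans Sub (ltry _)).
pose s := fine (ereal_sup S).
have hs x : pu x - u x <= s.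
  rewrite -lee_fin /s fineK// EFinB -PuE_pu; apply: ereal_sup_ubound.
  by exists x.
have sc : s <= - c by rewrite -lee_fin /s fineK.
have BuE : Bu Px Xn u = (s + 1)%:E by rewrite /Bu -/PuE -/S EFinD /s fineK.
have vE x : vu Px Xn u x = u x - pu x + (s + 1).
  by rewrite /vu /wu -/PuE BuE PuE_pu -EFinB -EFinD.
have mufin' : mu setT \is a fin_num by rewrite ge0_fin_numE.
pose m := fine (mu setT).
have muE : mu setT = m%:E by rewrite fineK.
have m0 : 0 <= m by rewrite /m fine_ge0.
pose K := Num.max (- c) 0.
have K0 : 0 <= K by rewrite /K le_max lexx orbT.
have Kc : - c <= K by rewrite /K le_max lexx.
pose un (n : nat) x := Num.min (u x) n%:R.
have mun n : measurable_fun setT (un n).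
  by apply: measurable_minr => //; exact: measurable_cst.
have un0 n x : 0 <= un n x.
  by rewrite /un le_min (le_trans _ (u1 x))//= ler01.
pose PunE n := Pop Px Xn (EFin \o un n).
have mEun n : measurable_fun setT (EFin \o un n) by exact/measurable_EFinP.
have mPun n : measurable_fun setT (PunE n) by apply: mPop => // x; rewrite /= lee_fin.
have Pun0 n x : (0 <= PunE n x)%E by apply: Pop_ge0 => y; rewrite /= lee_fin.
have Punn n x : (PunE n x <= n%:R%:E)%E.
  rewrite -(@Pop_cst _ _ _ _ _ Px Xn n%:R x); apply: Pop_le => //.
  - by move=> y; rewrite /= lee_fin.
  - by move=> y; rewrite /= lee_fin /un ge_min lexx orbT.
have PunPu n x : (PunE n x <= PuE x)%E.
  apply: Pop_le => //.
  - by move=> y; rewrite /= lee_fin.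
  - by move=> y; rewrite /= lee_fin /un ge_min lexx.
have Punfin n x : PunE n x \is a fin_num.
  by rewrite ge0_fin_numE// (le_lt_trans (Punn n x)) ?ltry.
pose pun n x := fine (PunE n x).
have PunE_pun n x : PunE n x = (pun n x)%:E by rewrite fineK.
have pun_le n x : pun n x <= pu x by rewrite -lee_fin -PunE_pun -PuE_pu.
have pun_len n x : pun n x <= n%:R by rewrite -lee_fin -PunE_pun.
have mpun n : measurable_fun setT (pun n).
  exact: measurableT_comp (fine_measurable measurableT) (mPun n).
pose g n x := (un n x - pun n x + K)%:E.
have g0 n x : (0 <= g n x)%E.
  rewrite /g lee_fin /un; have := hc' x; have := pun_le n x; have := pun_len n x.
  case: (leP (u x) n%:R) => h; rewrite ?(min_l (ltW h)) ?(min_l h) ?(min_r (ltW h)); lra.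
have mg n : measurable_fun setT (g n).
  apply/measurable_EFinP; apply: measurable_funD; last exact: measurable_cst.
  exact: measurable_funB.
have intg n : (\int[mu]_x g n x = (K * m)%:E)%E.
  pose I := (\int[mu]_x (un n x)%:E)%E.
  have I0 : (0 <= I)%E by apply: integral_ge0 => x _; rewrite lee_fin.
  have Ile : (I <= (n%:R * m)%:E)%E.
    apply: (@le_trans _ _ (\int[mu]_x (cst (n%:R)%:E x))%E).
      apply: ge0_le_integral => //.
      - by move=> x _; rewrite lee_fin.
      - exact: mEun.
      - by move=> x _; rewrite /= lee_fin /un ge_min lexx orbT.
    by rewrite integral_cst// muE.
  have Ifin : I \is a fin_num by rewrite ge0_fin_numE// (le_lt_trans Ile) ?ltry.
  have e1 : (\int[mu]_x (g n x + (pun n x)%:E) = \int[mu]_x ((un n x)%:E + K%:E))%E.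
    by apply: eq_integral => x _; rewrite /g -!EFinD; congr EFin; ring.
  rewrite ge0_integralD// in e1; try by move=> x _; rewrite lee_fin ?fine_ge0.
  2: exact/measurable_EFinP.
  rewrite ge0_integralD// in e1; try by move=> x _; rewrite lee_fin.
  2: exact: mEun.
  have e2 : (\int[mu]_x (pun n x)%:E = I)%E.
    transitivity (\int[mu]_x Pop Px Xn (EFin \o un n) x)%E.
      by apply: eq_integral => x _; rewrite -PunE_pun.
    by apply: hinv => // x; rewrite /= lee_fin.
  rewrite e2 -/I integral_cst// muE -EFinM in e1.
  have := congr1 (fun z => z - I)%E e1.
  by rewrite addeK// addeC addeK.
pose G x := limn_einf (fun n => g n x).
have hF : (\int[mu]_x G x <= (K * m)%:E)%E.
  have := @fatou _ _ R mu setT measurableT g (fun n => mg n) (fun n x _ => g0 n x).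
  have -> : (fun n => \int[mu]_x g n x)%E = (fun=> (K * m)%:E).
    by apply/funext => n; exact: intg.
  by rewrite (cvg_limn_einf_sup (cvg_cst _)).1.
pose h x := (u x - pu x + K)%:E.
have mpu : measurable_fun setT pu.
  exact: measurableT_comp (fine_measurable measurableT) mPu.
have mh : measurable_fun setT h.
  apply/measurable_EFinP; apply: measurable_funD; last exact: measurable_cst.
  exact: measurable_funB.
have h0 x : (0 <= h x)%E by rewrite /h lee_fin; have := hc' x; lra.
have mG : measurable_fun setT G.
  rewrite /G /limn_einf.
  have mm : measurable_fun setT (fun x => limn_esup (fun n => - g n x))%E.
    apply: (@measurable_fun_limn_esup _ _ R setT (fun n x => - g n x)%E).
    by move=> n; have := measurableT_comp (@oppe_measurable R setT) (mg n).
  by have := measurableT_comp (@oppe_measurable R setT) mm.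
have hG x : (h x <= G x)%E.
  rewrite /G limn_einf_lim; apply: lime_ge; first exact: is_cvg_einfs.
  exists (Num.bound (u x)) => // n /= hn.
  apply: le_ereal_inf_tmp => _ [k /= hk <-].
  have ux : u x <= k%:R.
    apply: ltW; apply: (lt_le_trans (archi_boundP (le_trans ler01 (u1 x)))).
    by rewrite ler_nat (leq_trans hn hk).
  rewrite /h /g lee_fin /un (min_l ux); have := pun_le k x; lra.
have hint : (\int[mu]_x h x <= (K * m)%:E)%E.
  apply: le_trans hF; apply: ge0_le_integral => //.
pose v := vu Px Xn u.
have v1 x : 1 <= v x by rewrite /v vE; have := hs x; lra.
have mv : measurable_fun setT v.
  rewrite (_ : v = fun x => u x - pu x + (s + 1)); last by apply/funext => x; rewrite /v vE.
  apply: measurable_funD; last exact: measurable_cst.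
  exact: measurable_funB.
pose a := `|s + 1 - K|.
pose A := K * m + a * m + 1.
have A0 : 0 < A.
  have : 0 <= a * m by rewrite mulr_ge0 // normr_ge0.
  have : 0 <= K * m by rewrite mulr_ge0.
  rewrite /A; lra.
have hA : (\int[mu]_x (v x)%:E <= A%:E)%E.
  have e : (\int[mu]_x (v x)%:E <= \int[mu]_x (h x + a%:E))%E.
    apply: ge0_le_integral => //.
    - by move=> x _; rewrite lee_fin (le_trans ler01 (v1 x)).
    - exact/measurable_EFinP.
    - by apply: emeasurable_funD => //; exact: measurable_cst.
    - move=> x _; rewrite /h /v vE -EFinD lee_fin.
      have := ler_norm (s + 1 - K); rewrite -/a; lra.
  apply: le_trans e _.
  rewrite ge0_integralD//; try by move=> x _; rewrite lee_fin ?normr_ge0.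
  rewrite integral_cst// muE.
  apply: le_trans (leeD hint (lexx _)) _.
  by rewrite -EFinM -EFinD lee_fin /A lerDl.
have p0 : 0 < p by lra.
have v0 x : 0 <= v x by exact: le_trans ler01 (v1 x).
split.
  move=> f; rewrite /in_Ep /in_Fp -/v => -[mf [M hMf]].
  rewrite inE; apply/andP; split; first by rewrite inE.
  rewrite inE /= /finite_norm.
  apply: le_lt_trans (@Lnorm_bound _ _ _ mu v f A (Num.max M 0) p mv v0 hA mf _ _ p0) (ltry _).
  - by rewrite le_max lexx orbT.
  - move=> x; apply: le_trans (hMf x) _; apply: ler_wpM2r => //.
    by rewrite le_max lexx.
exists (A `^ p^-1); split; first exact: powR_ge0.
move=> f; rewrite /in_Ep /in_Fp -/v => -[mf _].
have hN x : ((`|f x| / v x `^ p^-1)%:E <= Ep_norm Px Xn u p f)%E.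
  by apply: ereal_sup_ubound; exists x.
have N0 : (0 <= Ep_norm Px Xn u p f)%E.
  by apply: le_trans (hN x0); rewrite lee_fin divr_ge0 // powR_ge0.
case: (Ep_norm Px Xn u p f) hN N0 => [n| |] hN N0 //; last first.
  by rewrite muleC gt0_mulye ?leey// lte_fin powR_gt0.
have n0 : 0 <= n by rewrite -lee_fin.
have hf x : `|f x| `^ p <= n `^ p * v x.
  have vp : 0 < v x `^ p^-1 by rewrite powR_gt0 // (lt_le_trans ltr01 (v1 x)).
  have h1 : `|f x| <= n * v x `^ p^-1.
    by rewrite -ler_pdivrMr //; have := hN x; rewrite lee_fin.
  have -> : v x = (v x `^ p^-1) `^ p.
    by rewrite -powRrM mulVf ?gt_eqF // powRr1.
  rewrite -powRM ?powR_ge0 //.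
  by apply: ge0_ler_powR; rewrite ?nnegrE ?(ltW p0) ?mulr_ge0 ?powR_ge0.
apply: le_trans (@Lnorm_bound _ _ _ mu v f A _ p mv v0 hA mf (powR_ge0 _ _) hf p0) _.
rewrite -EFinM lee_fin powRM ?powR_ge0 ?(ltW A0) // -(powRrM n p p^-1) mulfV ?gt_eqF // powRr1 //.
by rewrite mulrC.
Qed.
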